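(* Let $\mu$ be the Cauchy distribution $d\mu(x)=\frac1\pi\frac{dx}{1+x^2}$ and $t>0$. Then \[\varphi_t(u)=\frac{4t}{\sqrt{u^2+1}\,\big(\sqrt{u^2+1}+\sqrt{u^2+1+4t}\big)},\qquad u\in\mathbb R.\]
   Context: $v_t(u)=\inf\{v>0:\int\frac{d\mu(x)}{(u-x)^2+v^2}\le\frac1t\}$; $H_{-t}(z)=z-t\int\frac{d\mu(x)}{z-x}$; $f_t(u_0)=\mathrm{Re}[H_{-t}(u_0+iv_t(u_0))]$, a strictly increasing homeomorphism of $\mathbb R$; $\varphi_t(u)=2v_t(f_t^{-1}(u))$. *)

(* Defs.v *)
From mathcomp Require Import all_boot all_order all_algebra.
From mathcomp Require Import all_classical all_reals all_analysis.
Set Implicit Arguments. Unset Strict Implicit. Unset Printing Implicit Defensive.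
Import Order.TTheory GRing.Theory Num.Theory.
Local Open Scope classical_set_scope.
Local Open Scope ring_scope.

Section defs.
Variable R : realType.

Definition cauchy_int (g : R -> R) : R :=
  fine (\int[@lebesgue_measure R]_x ((g x) * (pi * (1 + x ^+ 2))^-1)%:E)%E.

(* Below, I : (R -> R) -> R stands for g |-> \int g(x) dmu(x). *)

Definition v_t (I : (R -> R) -> R) (t u : R) : R :=
  inf [set v : R | 0 < v /\ I (fun x => ((u - x) ^+ 2 + v ^+ 2)^-1) <= t^-1].

(* Re[H_{-t}(a + i b)] = a - t \int (a - x) / ((a - x)^2 + b^2) dmu(x),
   since Re (1/(a + i b - x)) = (a - x)/((a - x)^2 + b^2). *)
Definition ReH (I : (R -> R) -> R) (t a b : R) : R :=
  a - t * I (fun x => (a - x) / ((a - x) ^+ 2 + b ^+ 2)).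

Definition f_t (I : (R -> R) -> R) (t u0 : R) : R := ReH I t u0 (v_t I t u0).

(* f_t^{-1}(u): the (unique, f_t being a bijection) preimage of u, chosen by [xget] *)
Definition f_t_inv (I : (R -> R) -> R) (t u : R) : R :=
  xget 0 [set u0 : R | f_t I t u0 = u].

Definition phi_t (I : (R -> R) -> R) (t u : R) : R := 2 * v_t I t (f_t_inv I t u).

End defs.

(* Main.v *)
Require Import Defs.
From mathcomp Require Import all_boot all_order all_algebra.
From mathcomp Require Import all_classical all_reals all_analysis.
From mathcomp Require Import measurable_realfun.
From mathcomp Require Import ring lra.
Set Implicit Arguments. Unset Strict Implicit. Unset Printing Implicit Defensive.
Import Order.TTheory GRing.Theory Num.Theory.
Import numFieldNormedType.Exports.
Local Open Scope classical_set_scope.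
Local Open Scope ring_scope.

Section S.
Context {R : realType}.
Notation mu := (@lebesgue_measure R).

Lemma my_derive_comp (f g : R -> R) (x df dg : R) :
  is_derive x 1 f df -> is_derive (f x) 1 g dg -> is_derive x 1 (g \o f) (dg * df).
Proof.
move=> hf hg; have df1 := @ex_derive _ _ _ _ _ _ _ hf.
have dg1 := @ex_derive _ _ _ _ _ _ _ hg.
apply: DeriveDef.
  apply/derivable1_diffP; apply: differentiable_comp; exact/derivable1_diffP.
rewrite -derive1E derive1_comp // !derive1E !derive_val //.
Qed.


Lemma is_derive_ln_comp (g : R -> R) (x dg : R) : 0 < g x -> is_derive x 1 g dg ->
  is_derive x 1 (fun y => ln (g y)) (dg / g x).
Proof.
move=> g0 hg; have := my_derive_comp hg (is_derive1_ln g0).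
by rewrite mulrC.
Qed.

Lemma is_derive_atan_comp (g : R -> R) (x dg : R) : is_derive x 1 g dg ->
  is_derive x 1 (fun y => atan (g y)) (dg / (1 + g x ^+ 2)).
Proof.
move=> hg; have := my_derive_comp hg (is_derive1_atan (g x)).
by rewrite mulrC.
Qed.

Lemma ge0_int_R (f F : R -> R) (l1 l0 : R) :
 (forall x, 0 <= f x)%R -> continuous f -> (forall x : R, is_derive x 1%R F (f x)) ->
 F x @[x --> +oo%R] --> l1 -> F x @[x --> -oo%R] --> l0 ->
 (\int[mu]_x (f x)%:E = (l1 - l0)%:E)%E.
Proof.
move=> f0 cf dF Fl1 Fl0.
have mf : measurable_fun [set: R] f by exact: continuous_measurable_fun.
have mposnums : measurable [set x : R | 0 <= x]%R by rewrite -set_itvcy.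
have dF' x : derivable F x 1%R by have [] := dF x.
have cF : continuous F.
  by move=> x; apply: differentiable_continuous; exact/derivable1_diffP.
rewrite -(setUv [set x : R | 0 <= x]%R) ge0_integral_setU//= ; last 4 first.
  exact: measurableC.
  by apply/measurable_EFinP; rewrite setUv.
  by move=> x _; rewrite lee_fin.
  exact/disj_setPCl.
rewrite -set_itvcy// setCitvr.
rewrite integral_itv_bndo_bndc; last exact/measurable_EFinP/measurable_funTS.
rewrite -{2}oppr0 ge0_integration_by_substitutionNy//; last first.
  exact: continuous_subspaceT.
have dG (x : R) : is_derive x 1%R (fun x => - F (- x))%R (f (- x))%R.
  have := (@is_deriveN _ _ _ _ x 1%R _ (my_derive_comp (is_deriveNid x 1%R) (dF (- x)%R))).
  by rewrite mulrN1 opprK.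
have h1 := (@ge0_continuous_FTC2y _ f F 0 l1).
have h2 := (@ge0_continuous_FTC2y _ (f \o -%R) (fun x => - F (- x))%R 0 (- l0)).
rewrite h1; first last.
- by move=> x _; rewrite derive1E derive_val.
- exact: cvg_at_right_filter (cF 0%R).
- by move=> x _; exact: dF'.
- done.
- exact: continuous_subspaceT.
- by move=> x _; exact: f0.
rewrite h2; first last.
- by move=> x _; rewrite derive1E derive_val.
- apply: cvg_at_right_filter; apply: cvgN; apply: (@continuous_comp _ _ _ -%R F); [exact: oppr_continuous | exact: cF].
- by move=> x _; have [] := dG x.
- apply: cvgN; exact/cvgNy_compNP.
- apply: continuous_subspaceT => x; apply: (@continuous_comp _ _ _ -%R f); [exact: oppr_continuous | exact: cf].
- by move=> x _; exact: f0.
rewrite oppr0 -!EFinD; congr EFin; lra.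
Qed.

Lemma cont_der (f : R -> R) : (forall x, derivable f x 1) -> continuous f.
Proof. by move=> df x; apply: differentiable_continuous; exact/derivable1_diffP. Qed.

Lemma k_der (M x : R) : derivable (fun x : R => M * (1 + x ^+ 2)^-1) x 1.
Proof.
apply: derivableM => //; apply: derivableV => //.
  by apply/lt0r_neq0; rewrite ltr_pwDl // sqr_ge0.
Qed.

Lemma k_is_der (M x : R) : is_derive x 1 (fun x : R => M * atan x) (M / (1 + x ^+ 2)).
Proof.
by apply: is_derive_eq.
Qed.

Lemma atan_cvgNy : atan x @[x --> -oo] --> (- (pi / 2) : R).
Proof.
apply/cvgNy_compNP.
have -> : (@atan R \o -%R) = (fun x => - atan x) by apply/funext => x /=; rewrite atanN.
apply: cvgN; exact: cvgy_atan.
Qed.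

Lemma int_R_signed (f F : R -> R) (l1 l0 M : R) : 0 <= M ->
  continuous f -> (forall x : R, is_derive x 1 F (f x)) ->
  F x @[x --> +oo] --> l1 -> F x @[x --> -oo] --> l0 ->
  (forall x, - (M / (1 + x ^+ 2)) <= f x) ->
  (\int[mu]_x (f x)%:E = (l1 - l0)%:E)%E.
Proof.
move=> M0 cf dF Fl1 Fl0 fM.
pose k x := M / (1 + x ^+ 2).
have k0 x : 0 <= k x by rewrite /k divr_ge0 // addr_ge0 // sqr_ge0.
have ck : continuous k by apply: cont_der => x; exact: k_der.
have hk : (\int[mu]_x (k x)%:E = (M * (pi / 2) - M * (- (pi / 2)))%:E)%E.
  apply: (@ge0_int_R k (fun x => M * atan x)).
  - exact: k0.
  - exact: ck.
  - by apply: cvgM; [exact: cvg_cst | exact: cvgy_atan].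
  - by apply: cvgM; [exact: cvg_cst | exact: atan_cvgNy].
have hg : (\int[mu]_x (f x + k x)%:E =
    ((l1 + M * (pi / 2)) - (l0 + M * (- (pi / 2))))%:E)%E.
  apply: (@ge0_int_R _ (fun x => F x + M * atan x)).
  - by move=> x; have := fM x; rewrite /k; lra.
  - by move=> x; apply: cvgD; [exact: cf | exact: ck].
  - by apply: cvgD => //; apply: cvgM; [exact: cvg_cst | exact: cvgy_atan].
  - by apply: cvgD => //; apply: cvgM; [exact: cvg_cst | exact: atan_cvgNy].
have mk : measurable_fun [set: R] k by exact: continuous_measurable_fun.
have mg : measurable_fun [set: R] (fun x => f x + k x).
  by apply: continuous_measurable_fun => x; apply: cvgD; [exact: cf | exact: ck].
have ik : mu.-integrable [set: R] (EFin \o k).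
  apply/integrableP; split; first exact/measurable_EFinP.
  under eq_integral do rewrite /= ger0_norm //.
  by rewrite hk ltry.
have ig : mu.-integrable [set: R] (EFin \o (fun x => f x + k x)).
  apply/integrableP; split; first exact/measurable_EFinP.
  have g0 x : 0 <= f x + k x by have := fM x; rewrite /k; lra.
  under eq_integral do rewrite /= ger0_norm ?g0 //.
  by rewrite hg ltry.
transitivity (\int[mu]_x ((f x + k x)%:E - (k x)%:E))%E.
  by apply: eq_integral => x _; rewrite -EFinB addrK.
rewrite integralB_EFin // hg hk; congr EFin; lra.
Qed.
Lemma cont_rat (p q : {poly R}) : (forall x, q.[x] != 0) ->
  continuous (fun x => p.[x] / q.[x]).
Proof.
move=> q0 x.
apply: (@cvgM _ _ _ _ (horner p) (fun x => (q.[x])^-1)).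
  exact: continuous_horner.
apply: cvgV => //; exact: continuous_horner.
Qed.

Lemma cvgy_ratpoly (p q : {poly R}) (f : R -> R) : q.[0] != 0 ->
  (\forall x \near +oo, f x = p.[x^-1] / q.[x^-1]) ->
  f x @[x --> +oo] --> p.[0] / q.[0].
Proof.
move=> q0 fE.
have hy : x^-1 @[x --> +oo] --> (0:R).
  apply/gtr0_cvgV0; last exact: cvg_id.
  by near=> x; near: x; apply: nbhs_pinfty_gt.
have fE' : \forall x \near +oo, (fun x => p.[x^-1] / q.[x^-1]) x = f x.
  by apply: filterS fE => x ->.
apply: cvg_trans (near_eq_cvg fE') _.
have hr : (fun y => p.[y] / q.[y]) y @[y --> 0] --> p.[0] / q.[0].
  apply: (@cvgM _ _ _ _ (horner p) (fun x => (q.[x])^-1)).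
    exact: continuous_horner.
  apply: cvgV => //; exact: continuous_horner.
exact: (cvg_comp _ _ hy hr).
Unshelve. all: by end_near. Qed.

Lemma lin_cvgy (a b : R) : 0 < b -> (x - a) / b @[x --> +oo] --> +oo.
Proof.
move=> b0; apply/cvgryPge => A; near=> x.
rewrite ler_pdivlMr // lerBrDr; near: x; apply: nbhs_pinfty_ge; exact: num_real.
Unshelve. all: by end_near. Qed.

Lemma atan_lin_cvg (a b : R) : 0 < b -> atan ((x - a) / b) @[x --> +oo] --> pi / 2.
Proof.
move=> b0; apply: (cvg_comp _ _ (lin_cvgy a b0)); exact: cvgy_atan.
Qed.

Lemma ln_ratio_cvg (a b : R) : 0 < b ->
  ln (1 + x * x) - ln ((x - a) * (x - a) + b * b) @[x --> +oo] --> (0 : R).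
Proof.
move=> b0.
have P0 (x : R) : 0 < 1 + x * x by nra.
have Q0 (x : R) : 0 < (x - a) * (x - a) + b * b by apply: ltr_wpDl; [rewrite -expr2 sqr_ge0 | exact: mulr_gt0].
have -> : (fun x => ln (1 + x * x) - ln ((x - a) * (x - a) + b * b)) =
    (fun x => ln ((1 + x * x) / ((x - a) * (x - a) + b * b))).
  by apply/funext => x; rewrite ln_div // posrE.
have hr : (1 + x * x) / ((x - a) * (x - a) + b * b) @[x --> +oo] --> (1 : R).
  have := @cvgy_ratpoly ('X^2 + 1) ((1 - a *: 'X)^+2 + (b ^+ 2) *: 'X^2)
    (fun x => (1 + x * x) / ((x - a) * (x - a) + b * b)).
  rewrite !hornerE /= expr0n /= !mulr0 !subr0 !addr0 expr1n add0r divr1.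
  apply; first exact: oner_neq0.
  near=> x.
  have x0 : x != 0 by apply/lt0r_neq0; near: x; apply: nbhs_pinfty_gt.
  rewrite !hornerE.
  rewrite /=.
  have q0 : (x - a) * (x - a) + b * b != 0 by exact/lt0r_neq0/Q0.
  by field; rewrite x0 /= !expr2.
have := cvg_comp _ _ hr (@continuous_ln R 1 ltr01).
by rewrite ln1.
Unshelve. all: by end_near. Qed.

Lemma pos1 (x : R) : 0 < 1 + x * x.
Proof. by nra. Qed.

Lemma posQ (a b x : R) : 0 < b -> 0 < (x - a) * (x - a) + b * b.
Proof. by move=> b0; apply: ltr_wpDl; [rewrite -expr2 sqr_ge0 | exact: mulr_gt0]. Qed.

Lemma I1_gen (a b : R) : 0 < b -> (a != 0) || (b != 1) ->
  cauchy_int (fun x => ((a - x) ^+ 2 + b ^+ 2)^-1) =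
  (b + 1) / (b * ((b + 1) ^+ 2 + a ^+ 2)).
Proof.
move=> b0 ab.
pose c := a ^+ 2 + b ^+ 2.
pose D := (c - 1) ^+ 2 + 4 * a ^+ 2.
pose k := (1 + a ^+ 2 - b ^+ 2) / b.
have D0 : 0 < D.
  have [a0|a0] := eqVneq a 0.
  - subst a; move: ab; rewrite eqxx /= => b1.
    rewrite /D /c expr0n /= mulr0 addr0 add0r lt0r sqr_ge0 andbT sqrf_eq0 subr_eq0.
    rewrite sqrf_eq1 negb_or b1 /=; apply/eqP => bN.
    by move: b0; rewrite bN; lra.
  - rewrite /D; apply: ltr_wpDl; first exact: sqr_ge0.
    by rewrite mulr_gt0 // lt0r sqr_ge0 sqrf_eq0 a0.
have pi0 : 0 < (pi : R) by exact: pi_gt0.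
pose F x := (pi * D)^-1 * (a * (ln (1 + x * x) - ln ((x - a) * (x - a) + b * b))
   + (c - 1) * atan x + k * atan ((x - a) / b)).
pose l := (pi * D)^-1 * ((c - 1) * (pi / 2) + k * (pi / 2)).
pose f x := ((a - x) ^+ 2 + b ^+ 2)^-1 * (pi * (1 + x ^+ 2))^-1.
have hd (x : R) : is_derive x 1 F (f x).
  have h1 := @is_derive_ln_comp (fun x => 1 + x * x) x _ (pos1 x) _.
  have h2 := @is_derive_ln_comp (fun x => (x - a) * (x - a) + b * b) x _ (posQ a x b0) _.
  have h3 := @is_derive_atan_comp (fun x => (x - a) / b) x _ _.
  apply: is_derive_eq.
  have sE (u v : R) : u *: v = u * v by [].
  rewrite !sE /f /k /D /c.
  move: pi0 D0; rewrite /D /c; generalize (@pi R) => p p0 D0.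
  have hq := posQ a x b0.
  have bb := mulr_gt0 b0 b0.
  field; rewrite !lt0r_neq0 // ?expr2; nra.
have h0 (x : R) : 0 <= f x.
  rewrite /f mulr_ge0 //.
    by rewrite invr_ge0; have := sqr_ge0 (a - x); have := sqr_ge0 b; lra.
  by rewrite invr_ge0 mulr_ge0 ?(ltW pi0) //; have := sqr_ge0 x; lra.
have hc : continuous f.
  apply: cont_der => x; apply: derivableM => //; apply: derivableV => //.
    by apply/lt0r_neq0; have := sqr_ge0 (a - x); have := exprn_gt0 2 b0; lra.
  by apply/lt0r_neq0; rewrite mulr_gt0 //; have := sqr_ge0 x; lra.
have hl1 : F x @[x --> +oo] --> l.
  have -> : l = (pi * D)^-1 * (a * 0 + (c - 1) * (pi / 2) + k * (pi / 2)).
    by rewrite /l mulr0 add0r.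
  apply: cvgM; first exact: cvg_cst.
  apply: cvgD; first apply: cvgD.
  - apply: cvgM; [exact: cvg_cst | exact: ln_ratio_cvg].
  - apply: cvgM; [exact: cvg_cst | exact: cvgy_atan].
  - apply: cvgM; [exact: cvg_cst | exact: atan_lin_cvg].
have hl0 : F x @[x --> -oo] --> - l.
  apply/cvgNy_compNP.
  have -> : F \o -%R = (fun x => (pi * D)^-1 * (a * (ln (1 + x * x)
      - ln ((x - - a) * (x - - a) + b * b)) - (c - 1) * atan x - k * atan ((x - - a) / b))).
    apply/funext => x; rewrite /F /= mulrNN.
    have -> : (- x - a) / b = - ((x - - a) / b) by rewrite -mulNr; congr (_ * _); ring.
    have -> : (- x - a) * (- x - a) = (x - - a) * (x - - a) by ring.
    by rewrite !atanN !mulrN.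
  have -> : - l = (pi * D)^-1 * (a * 0 - (c - 1) * (pi / 2) - k * (pi / 2)).
    by rewrite /l mulr0 add0r -mulrN opprD.
  apply: cvgM; first exact: cvg_cst.
  apply: cvgB; first apply: cvgB.
  - apply: cvgM; [exact: cvg_cst | exact: ln_ratio_cvg].
  - apply: cvgM; [exact: cvg_cst | exact: cvgy_atan].
  - apply: cvgM; [exact: cvg_cst | exact: atan_lin_cvg].
rewrite /cauchy_int (ge0_int_R h0 hc hd hl1 hl0) /=.
rewrite /l /k; move: pi0 D0; rewrite /D /c; generalize (@pi R) => p p0 D0.
have bb := mulr_gt0 b0 b0.
field; rewrite !lt0r_neq0 //; have := sqr_ge0 a; have := sqr_ge0 (b + 1); nra.
Qed.

Lemma I2_gen (a b : R) : 0 < b -> (a != 0) || (b != 1) ->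
  cauchy_int (fun x => (a - x) / ((a - x) ^+ 2 + b ^+ 2)) =
  a / (a ^+ 2 + (b + 1) ^+ 2).
Proof.
move=> b0 ab.
pose c := a ^+ 2 + b ^+ 2.
pose D := (c - 1) ^+ 2 + 4 * a ^+ 2.
have D0 : 0 < D.
  have [a0|a0] := eqVneq a 0.
  - subst a; move: ab; rewrite eqxx /= => b1.
    rewrite /D /c expr0n /= mulr0 addr0 add0r lt0r sqr_ge0 andbT sqrf_eq0 subr_eq0.
    rewrite sqrf_eq1 negb_or b1 /=; apply/eqP => bN.
    by move: b0; rewrite bN; lra.
  - rewrite /D; apply: ltr_wpDl; first exact: sqr_ge0.
    by rewrite mulr_gt0 // lt0r sqr_ge0 sqrf_eq0 a0.
pose A := (2 * a ^+ 2 - c + 1) / D.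
pose B := a * (c + 1) / D.
pose m := (a - c * B - A * a) / b.
have pi0 : 0 < (pi : R) by exact: pi_gt0.
pose F x := pi^-1 * (A / 2 * (ln (1 + x * x) - ln ((x - a) * (x - a) + b * b))
   + B * atan x + m * atan ((x - a) / b)).
pose l := pi^-1 * (B * (pi / 2) + m * (pi / 2)).
pose f x := (a - x) / ((a - x) ^+ 2 + b ^+ 2) * (pi * (1 + x ^+ 2))^-1.
pose M := (2 * b * pi)^-1.
have hd (x : R) : is_derive x 1 F (f x).
  have h1 := @is_derive_ln_comp (fun x => 1 + x * x) x _ (pos1 x) _.
  have h2 := @is_derive_ln_comp (fun x => (x - a) * (x - a) + b * b) x _ (posQ a x b0) _.
  have h3 := @is_derive_atan_comp (fun x => (x - a) / b) x _ _.
  apply: is_derive_eq.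
  have sE (u v : R) : u *: v = u * v by [].
  rewrite !sE /f /m /A /B.
  move: pi0 D0; rewrite /D /c; generalize (@pi R) => p p0 D0.
  have hq := posQ a x b0.
  have bb := mulr_gt0 b0 b0.
  field; rewrite !lt0r_neq0 // ?expr2; nra.
have hM (x : R) : - (M / (1 + x ^+ 2)) <= f x.
  have e : f x + M / (1 + x ^+ 2) =
      (a - x + b) ^+ 2 / (2 * b * pi * (1 + x ^+ 2) * ((a - x) ^+ 2 + b ^+ 2)).
    rewrite /f /M.
    move: pi0; generalize (@pi R) => p p0.
    have hq := posQ a x b0.
    have bb := mulr_gt0 b0 b0.
    field; rewrite !lt0r_neq0 // ?expr2; nra.
  suff : 0 <= f x + M / (1 + x ^+ 2) by lra.
  rewrite e divr_ge0 ?sqr_ge0 // mulr_ge0 // ?mulr_ge0 ?(ltW pi0) ?(ltW b0) //.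
    by have := sqr_ge0 x; lra.
  by have := sqr_ge0 (a - x); have := sqr_ge0 b; lra.
have hc : continuous f.
  apply: cont_der => x; apply: derivableM => //.
    apply: derivableM => //; apply: derivableV => //.
    by apply/lt0r_neq0; have := sqr_ge0 (a - x); have := exprn_gt0 2 b0; lra.
  apply: derivableV => //.
  by apply/lt0r_neq0; rewrite mulr_gt0 //; have := sqr_ge0 x; lra.
have hl1 : F x @[x --> +oo] --> l.
  have -> : l = pi^-1 * (A / 2 * 0 + B * (pi / 2) + m * (pi / 2)).
    by rewrite /l mulr0 add0r.
  apply: cvgM; first exact: cvg_cst.
  apply: cvgD; first apply: cvgD.
  - apply: cvgM; [exact: cvg_cst | exact: ln_ratio_cvg].
  - apply: cvgM; [exact: cvg_cst | exact: cvgy_atan].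
  - apply: cvgM; [exact: cvg_cst | exact: atan_lin_cvg].
have hl0 : F x @[x --> -oo] --> - l.
  apply/cvgNy_compNP.
  have -> : F \o -%R = (fun x => pi^-1 * (A / 2 * (ln (1 + x * x)
      - ln ((x - - a) * (x - - a) + b * b)) - B * atan x - m * atan ((x - - a) / b))).
    apply/funext => x; rewrite /F /= mulrNN.
    have -> : (- x - a) / b = - ((x - - a) / b) by rewrite -mulNr; congr (_ * _); ring.
    have -> : (- x - a) * (- x - a) = (x - - a) * (x - - a) by ring.
    by rewrite !atanN !mulrN.
  have -> : - l = pi^-1 * (A / 2 * 0 - B * (pi / 2) - m * (pi / 2)).
    by rewrite /l mulr0 add0r -mulrN opprD.
  apply: cvgM; first exact: cvg_cst.
  apply: cvgB; first apply: cvgB.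
  - apply: cvgM; [exact: cvg_cst | exact: ln_ratio_cvg].
  - apply: cvgM; [exact: cvg_cst | exact: cvgy_atan].
  - apply: cvgM; [exact: cvg_cst | exact: atan_lin_cvg].
have M0 : 0 <= M by rewrite /M invr_ge0 mulr_ge0 ?mulr_ge0 ?(ltW pi0) ?(ltW b0).
rewrite /cauchy_int (int_R_signed M0 hc hd hl1 hl0 hM) /=.
rewrite /l /m /A /B; move: pi0 D0; rewrite /D /c; generalize (@pi R) => p p0 D0.
have bb := mulr_gt0 b0 b0.
field; rewrite !lt0r_neq0 //; have := sqr_ge0 a; have := sqr_ge0 (b + 1); nra.
Qed.

Lemma I1_deg : cauchy_int (fun x : R => ((0 - x) ^+ 2 + 1 ^+ 2)^-1) = 1 / 2.
Proof.
have pi0 : 0 < (pi : R) by exact: pi_gt0.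
pose F (x : R) := (2 * pi)^-1 * (x / (1 + x * x) + atan x).
pose l : R := (2 * pi)^-1 * (pi / 2).
pose f (x : R) := ((0 - x) ^+ 2 + 1 ^+ 2)^-1 * (pi * (1 + x ^+ 2))^-1.
have hd (x : R) : is_derive x 1 F (f x).
  have hv := is_deriveV (f := fun x => 1 + x * x) (v := 1) (lt0r_neq0 (pos1 x)) _.
  apply: is_derive_eq.
  have sE (u v : R) : u *: v = u * v by [].
  rewrite ?sE /f.
  move: pi0; generalize (@pi R) => p p0.
  have hq := pos1 x.
  field; rewrite !lt0r_neq0 // ?expr2; nra.
have h0 (x : R) : 0 <= f x.
  rewrite /f mulr_ge0 //.
    by rewrite invr_ge0; have := sqr_ge0 (0 - x); lra.
  by rewrite invr_ge0 mulr_ge0 ?(ltW pi0) //; have := sqr_ge0 x; lra.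
have hc : continuous f.
  apply: cont_der => x; apply: derivableM => //; apply: derivableV => //.
    by apply/lt0r_neq0; have := sqr_ge0 (0 - x); lra.
  by apply/lt0r_neq0; rewrite mulr_gt0 //; have := sqr_ge0 x; lra.
have r0 : x / (1 + x * x) @[x --> +oo] --> (0 : R).
  have := @cvgy_ratpoly 'X ('X^2 + 1) (fun x => x / (1 + x * x)).
  rewrite !hornerE /=.
  apply; first by rewrite expr0n /= add0r oner_neq0.
  near=> x.
  have x0 : x != 0 by apply/lt0r_neq0; near: x; apply: nbhs_pinfty_gt; exact: num_real.
  rewrite !hornerE /=.
  have := pos1 x => hq.
  by field; rewrite x0 /= lt0r_neq0 // -expr2.
have hl1 : F x @[x --> +oo] --> l.
  have -> : l = (2 * pi)^-1 * (0 + pi / 2) by rewrite /l add0r.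
  apply: cvgM; first exact: cvg_cst.
  apply: cvgD; [exact: r0 | exact: cvgy_atan].
have hl0 : F x @[x --> -oo] --> - l.
  apply/cvgNy_compNP.
  have -> : F \o -%R = (fun x => (2 * pi)^-1 * (- (x / (1 + x * x)) - atan x)).
    by apply/funext => x; rewrite /F /= mulrNN atanN mulNr.
  have -> : - l = (2 * pi)^-1 * (- 0 - pi / 2) by rewrite /l oppr0 sub0r mulrN.
  apply: cvgM; first exact: cvg_cst.
  apply: cvgB; [apply: cvgN; exact: r0 | exact: cvgy_atan].
rewrite /cauchy_int (ge0_int_R h0 hc hd hl1 hl0) /=.
rewrite /l; move: pi0; generalize (@pi R) => p p0.
by field; rewrite lt0r_neq0.
Unshelve. all: by end_near. Qed.

Lemma f2_low (a b x : R) : 0 < b ->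
  - ((2 * b * pi)^-1 / (1 + x ^+ 2)) <=
  (a - x) / ((a - x) ^+ 2 + b ^+ 2) * (pi * (1 + x ^+ 2))^-1.
Proof.
move=> b0.
have pi0 : 0 < (pi : R) by exact: pi_gt0.
have e : (a - x) / ((a - x) ^+ 2 + b ^+ 2) * (pi * (1 + x ^+ 2))^-1 +
    (2 * b * pi)^-1 / (1 + x ^+ 2) =
    (a - x + b) ^+ 2 / (2 * b * pi * (1 + x ^+ 2) * ((a - x) ^+ 2 + b ^+ 2)).
  move: pi0; generalize (@pi R) => p p0.
  have hq := posQ a x b0.
  have bb := mulr_gt0 b0 b0.
  field; rewrite !lt0r_neq0 // ?expr2; nra.
suff : 0 <= (a - x) / ((a - x) ^+ 2 + b ^+ 2) * (pi * (1 + x ^+ 2))^-1 +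
    (2 * b * pi)^-1 / (1 + x ^+ 2) by lra.
rewrite e divr_ge0 ?sqr_ge0 // mulr_ge0 // ?mulr_ge0 ?(ltW pi0) ?(ltW b0) //.
  by have := sqr_ge0 x; lra.
by have := sqr_ge0 (a - x); have := sqr_ge0 b; lra.
Qed.

Lemma f2_cont (a b : R) : 0 < b ->
  continuous (fun x => (a - x) / ((a - x) ^+ 2 + b ^+ 2) * (pi * (1 + x ^+ 2))^-1).
Proof.
move=> b0; have pi0 : 0 < (pi : R) by exact: pi_gt0.
apply: cont_der => x; apply: derivableM => //.
  apply: derivableM => //; apply: derivableV => //.
  by apply/lt0r_neq0; have := sqr_ge0 (a - x); have := exprn_gt0 2 b0; lra.
apply: derivableV => //.
by apply/lt0r_neq0; rewrite mulr_gt0 //; have := sqr_ge0 x; lra.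
Qed.

Lemma I2_deg : cauchy_int (fun x : R => (0 - x) / ((0 - x) ^+ 2 + 1 ^+ 2)) = 0.
Proof.
have pi0 : 0 < (pi : R) by exact: pi_gt0.
pose F (x : R) := (2 * pi)^-1 * (1 + x * x)^-1.
pose f (x : R) := (0 - x) / ((0 - x) ^+ 2 + 1 ^+ 2) * (pi * (1 + x ^+ 2))^-1.
have hd (x : R) : is_derive x 1 F (f x).
  have hv := is_deriveV (f := fun x => 1 + x * x) (v := 1) (lt0r_neq0 (pos1 x)) _.
  apply: is_derive_eq.
  have sE (u v : R) : u *: v = u * v by [].
  rewrite ?sE /f.
  move: pi0; generalize (@pi R) => p p0.
  have hq := pos1 x.
  field; rewrite !lt0r_neq0 // ?expr2; nra.
have r0 : (1 + x * x)^-1 @[x --> +oo] --> (0 : R).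
  have := @cvgy_ratpoly ('X^2) ('X^2 + 1) (fun x => (1 + x * x)^-1).
  rewrite !hornerE /= expr0n /= mul0r.
  apply; first by rewrite add0r oner_neq0.
  near=> x.
  have x0 : x != 0 by apply/lt0r_neq0; near: x; apply: nbhs_pinfty_gt; exact: num_real.
  rewrite !hornerE /=.
  have := pos1 x => hq.
  by field; rewrite x0 /= lt0r_neq0 // -expr2.
have hl1 : F x @[x --> +oo] --> 0.
  rewrite -(mulr0 (2 * pi)^-1).
  apply: cvgM; [exact: cvg_cst | exact: r0].
have hl0 : F x @[x --> -oo] --> - 0.
  apply/cvgNy_compNP; rewrite oppr0.
  have -> : F \o -%R = F by apply/funext => x; rewrite /F /= mulrNN.
  exact: hl1.
rewrite /cauchy_int (int_R_signed _ (f2_cont (a:=0) ltr01) hd hl1 hl0 (fun x => f2_low 0 x ltr01)) /=.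
  by rewrite oppr0 subr0.
by rewrite invr_ge0 !mulr_ge0 ?(ltW pi0).
Unshelve. all: by end_near. Qed.

Lemma I1 (a b : R) : 0 < b ->
  cauchy_int (fun x => ((a - x) ^+ 2 + b ^+ 2)^-1) =
  (b + 1) / (b * ((b + 1) ^+ 2 + a ^+ 2)).
Proof.
move=> b0; have [ab|] := boolP ((a != 0) || (b != 1)); first exact: I1_gen.
rewrite negb_or !negbK => /andP[/eqP -> /eqP ->].
by rewrite I1_deg; field.
Qed.

Lemma I2 (a b : R) : 0 < b ->
  cauchy_int (fun x => (a - x) / ((a - x) ^+ 2 + b ^+ 2)) =
  a / (a ^+ 2 + (b + 1) ^+ 2).
Proof.
move=> b0; have [ab|] := boolP ((a != 0) || (b != 1)); first exact: I2_gen.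
rewrite negb_or !negbK => /andP[/eqP -> /eqP ->].
by rewrite I2_deg mul0r.
Qed.

Definition Qp (a t v : R) := v * (v + 1) ^+ 2 + a ^+ 2 * v - t * (v + 1).

Lemma Qp_mono (a t x y : R) : 0 < x -> x < y -> Qp a t x * (y + 1) < Qp a t y * (x + 1).
Proof.
move=> x0 xy.
have e : Qp a t y * (x + 1) - Qp a t x * (y + 1) =
  (y - x) * ((x + 1) * (y + 1) * (x + y + 1) + a ^+ 2) by rewrite /Qp; ring.
rewrite -subr_gt0 e mulr_gt0 ?subr_gt0 //.
apply: ltr_wpDr; first exact: sqr_ge0.
by rewrite !mulr_gt0 //; lra.
Qed.

Lemma Qp_uniq (a t x y : R) : 0 < x -> 0 < y -> Qp a t x = 0 -> Qp a t y = 0 -> x = y.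
Proof.
move=> x0 y0 hx hy; have [xy|yx|//] := ltgtP x y.
- by have := Qp_mono a t x0 xy; rewrite hx hy !mul0r ltxx.
- by have := Qp_mono a t y0 yx; rewrite hx hy !mul0r ltxx.
Qed.

Lemma key_ineq (a t v : R) : 0 < t -> 0 < v ->
  ((v + 1) / (v * ((v + 1) ^+ 2 + a ^+ 2)) <= t^-1) = (0 <= Qp a t v).
Proof.
move=> t0 v0.
have W0 : 0 < v * ((v + 1) ^+ 2 + a ^+ 2).
  by rewrite mulr_gt0 // ltr_pwDl ?sqr_ge0 // exprn_gt0 //; lra.
rewrite ler_pdivrMr // mulrC ler_pdivlMr // -subr_ge0.
by congr (0 <= _); rewrite /Qp; ring.
Qed.

Lemma vt_char (t a : R) : 0 < t ->
  exists2 r, 0 < r /\ Qp a t r = 0 & v_t (@cauchy_int R) t a = r.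
Proof.
move=> t0.
have cQ : continuous (Qp a t).
  by apply: cont_der => x; rewrite /Qp.
have [r rin Qr] : exists2 r, r \in `[0, t] & Qp a t r = 0.
  apply: IVT; first exact: ltW.
    exact: continuous_subspaceT.
  have q0 : Qp a t 0 = - t by rewrite /Qp; ring.
  have qt : 0 <= Qp a t t.
    have -> : Qp a t t = t * t * (t + 1) + a ^+ 2 * t by rewrite /Qp; ring.
    apply: addr_ge0; first by apply: mulr_ge0; [apply: mulr_ge0|]; lra.
    by apply: mulr_ge0; [exact: sqr_ge0 | lra].
  rewrite q0; apply/andP; split.
    by rewrite ge_min lerNl oppr0 (ltW t0).
  by rewrite le_max qt orbT.
have r0 : 0 < r.
  move: rin; rewrite in_itv /= => /andP[r0 _].
  rewrite lt_neqAle r0 andbT; apply/eqP => r0'.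
  by move: Qr; rewrite -r0' /Qp; lra.
exists r => //.
rewrite /v_t.
set S := [set v | _].
have rS : S r.
  by split => //; rewrite I1 // key_ineq // Qr.
have lbS : lbound S r.
  move=> v [v0]; rewrite I1 // key_ineq // => Qv.
  rewrite leNgt; apply/negP => vr.
  have := Qp_mono a t v0 vr; rewrite Qr mul0r.
  have : 0 <= Qp a t v * (r + 1) by rewrite mulr_ge0 //; lra.
  lra.
apply/eqP; rewrite eq_le; apply/andP; split.
  by apply: ge_inf => //; exists r.
by apply: lb_le_inf => //; exists r.
Qed.

Lemma ft_val (t a r : R) : 0 < t -> 0 < r -> Qp a t r = 0 ->
  v_t (@cauchy_int R) t a = r -> f_t (@cauchy_int R) t a = a / (r + 1).
Proof.
move=> t0 r0 Qr vr.
rewrite /f_t /ReH vr I2 //.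
have h1 : 0 < a ^+ 2 + (r + 1) ^+ 2 by rewrite ltr_wpDl ?sqr_ge0 // exprn_gt0 //; lra.
have e : a - t * (a / (a ^+ 2 + (r + 1) ^+ 2)) =
  a / (r + 1) + a * Qp a t r / ((r + 1) * (a ^+ 2 + (r + 1) ^+ 2)).
  rewrite /Qp; field; rewrite !lt0r_neq0 //; lra.
by rewrite e Qr mulr0 mul0r addr0.
Qed.
End S.

Theorem lemma6p10 (R : realType) (t : R) (ht : 0 < t) (u : R) :
  phi_t (@cauchy_int R) t u =
  4 * t / (Num.sqrt (u ^+ 2 + 1) *
           (Num.sqrt (u ^+ 2 + 1) + Num.sqrt (u ^+ 2 + 1 + 4 * t))).
Proof.
set s := u ^+ 2 + 1.
have s0 : 0 < s by rewrite /s ltr_pwDr // sqr_ge0.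
set p := Num.sqrt s; set q := Num.sqrt (s + 4 * t).
have p0 : 0 < p by rewrite sqrtr_gt0.
have q0 : 0 < q by rewrite sqrtr_gt0; lra.
have pp : p ^+ 2 = s by rewrite sqr_sqrtr //; lra.
have qq : q ^+ 2 = s + 4 * t by rewrite sqr_sqrtr //; lra.
clearbody p q.
set T := 4 * t / (p * (p + q)).
pose w := T / 2.
have w0 : 0 < w by rewrite /w /T !divr_gt0 // ?mulr_gt0 //; lra.
have hw : w * (w + 1) * s = t.
  have et : t = (q ^+ 2 - p ^+ 2) / 4 by rewrite qq pp; field.
  rewrite /w /T -pp et.
  by field; rewrite (lt0r_neq0 p0) andbT lt0r_neq0 //; lra.
have uniq_w r : 0 < r -> r * (r + 1) * s = t -> r = w.
  move=> r0 hr.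
  have e : (r - w) * ((r + w + 1) * s) = r * (r + 1) * s - w * (w + 1) * s by ring.
  have : (r - w) * ((r + w + 1) * s) = 0 by rewrite e hr hw subrr.
  move/eqP; rewrite mulf_eq0 => /orP[/eqP|/eqP]; first by move=> h; lra.
  move=> h; have hp : 0 < (r + w + 1) * s by rewrite mulr_gt0 //; lra.
  by rewrite h ltxx in hp.
have Qw (a : R) r : 0 < r -> a = u * (r + 1) -> Qp a t r = (r + 1) * (r * (r + 1) * s - t).
  by move=> _ ->; rewrite /Qp /s; ring.
pose u0 := u * (w + 1).
have fu0 : f_t (@cauchy_int R) t u0 = u.
  have [r [r0 Qr] vr] := vt_char u0 ht.
  have Qw0 : Qp u0 t w = 0 by rewrite (Qw u0 w w0 erefl) hw subrr mulr0.
  have rw := Qp_uniq r0 w0 Qr Qw0.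
  rewrite (ft_val ht r0 Qr vr) rw /u0 mulfK // lt0r_neq0 // addr_gt0 //.
have ex : exists x, [set u1 | f_t (@cauchy_int R) t u1 = u] x by exists u0.
rewrite /phi_t /f_t_inv.
move: (xgetPex 0 ex); set u1 := xget _ _ => /= fu1.
have [r [r0 Qr] vr] := vt_char u1 ht.
have e1 := ft_val ht r0 Qr vr.
have u1E : u1 = u * (r + 1).
  by rewrite -fu1 e1 divfK // lt0r_neq0 // addr_gt0.
have := Qw u1 r r0 u1E; rewrite Qr => /esym/eqP; rewrite mulf_eq0 => /orP[|/eqP h].
  by move/eqP => h; have := addr_gt0 r0 (@ltr01 R); rewrite h ltxx.
have hr : r * (r + 1) * s = t by apply/eqP; rewrite -subr_eq0 h.
by rewrite vr (uniq_w r r0 hr) /w mulrC divfK // pnatr_eq0.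
Qed.
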